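(* Let $F$ be any channel with input alphabet $\{0,1\}$ and finite output alphabet. Then there exists a channel $D$ with input and output alphabet $\{0,1\}$ such that $\eta_{TV}(D)=\eta_{TV}(F)$ and $$\mathrm{BEC}(\alpha(F))\succeq_{\mathrm{deg}}F\succeq_{\mathrm{deg}}D,$$ where $\alpha(F)=1-\eta_{TV}(F)$.
   Context: $TV(P,Q)=\frac12\sum_y|P(y)-Q(y)|$. Dobrushin coefficient $\eta_{TV}(P)=\sup_{P_X\ne Q_X}\frac{TV(P\circ P_X,P\circ Q_X)}{TV(P_X,Q_X)}$, $P\circ P_X$ the output distribution. Doeblin coefficient $\alpha(P)=\sum_y\min_xP_{Y|X}(y|x)$. $\mathrm{BEC}(\varepsilon)$: binary erasure channel with input $\{0,1\}$, output $\{0,e,1\}$, input $x$ mapped to $x$ with probability $1-\varepsilon$ and to $e$ with probability $\varepsilon$. $P_{Y|X}\succeq_{\mathrm{deg}}Q_{Y'|X}$ means $Q_{Y'|X}=D_{Y'|Y}\circ P_{Y|X}$ for some channel $D_{Y'|Y}$. *)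

(* Defs.v *)
From HB Require Import structures.
From mathcomp Require Import all_boot all_order all_algebra.
From mathcomp Require Import boolp classical_sets reals.
Set Implicit Arguments. Unset Strict Implicit. Unset Printing Implicit Defensive.
Import Order.TTheory GRing.Theory Num.Theory.
Local Open Scope ring_scope.

Section Channels.
Variable R : realType.

Definition is_dist (T : finType) (p : T -> R) : Prop :=
  (forall t, 0 <= p t) /\ \sum_(t : T) p t = 1.

(* channel P_{Y|X}: W x y = P(Y = y | X = x) *)
Definition is_channel (X Y : finType) (W : X -> Y -> R) : Prop :=
  forall x, is_dist (W x).

Definition out_dist (X Y : finType) (W : X -> Y -> R) (p : X -> R) : Y -> R :=
  fun y => \sum_(x : X) p x * W x y.

Definition TV (T : finType) (p q : T -> R) : R :=
  2^-1 * \sum_(t : T) `|p t - q t|.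

Definition eta_TV (X Y : finType) (W : X -> Y -> R) : R :=
  sup [set r : R | exists p q : X -> R,
        [/\ is_dist p, is_dist q, p <> q &
            r = TV (out_dist W p) (out_dist W q) / TV p q]].

Definition alpha (Y : finType) (W : bool -> Y -> R) : R :=
  \sum_(y : Y) Num.min (W false y) (W true y).

(* BEC(eps): output None is the erasure symbol e *)
Definition BEC (eps : R) : bool -> option bool -> R :=
  fun x y => match y with
             | None => eps
             | Some b => if b == x then 1 - eps else 0
             end.

(* P is degraded-dominating Q: Q = D o P for some channel D *)
Definition degraded (X Y Z : finType) (P : X -> Y -> R) (Q : X -> Z -> R) : Prop :=
  exists D : Y -> Z -> R, is_channel D /\
    forall x z, Q x z = \sum_(y : Y) P x y * D y z.

End Channels.

(* Main.v *)
Require Import Defs.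
From HB Require Import structures.
From mathcomp Require Import all_boot all_order all_algebra.
From mathcomp Require Import boolp classical_sets reals.
From mathcomp Require Import ring lra.
Import Order.TTheory GRing.Theory Num.Theory.
Local Open Scope classical_set_scope.
Local Open Scope ring_scope.

Lemma ratio_eq (R : realType) (Z : finType) (W : bool -> Z -> R) (p q : bool -> R) :
  p false + p true = 1 -> q false + q true = 1 -> p true != q true ->
  TV (out_dist W p) (out_dist W q) / TV p q = TV (W false) (W true).
Proof.
move=> hp hq hd.
have dE : forall y, out_dist W p y - out_dist W q y =
   (q true - p true) * (W false y - W true y).
  move=> y; rewrite /out_dist !big_bool /=.
  have -> : p false = 1 - p true by lra.
  have -> : q false = 1 - q true by lra.
  ring.
rewrite /TV !big_bool /=.
under eq_bigr do rewrite dE normrM.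
rewrite -mulr_sumr.
have -> : p false - q false = - (p true - q true) by lra.
rewrite normrN distrC.
have hn : `|p true - q true| != 0 by rewrite normr_eq0 subr_eq0.
set d := `|q true - p true|. set S := \sum_(i : Z) _. idtac.
by field; rewrite -mulr2n mulrn_eq0 negb_or hn.
Qed.

Lemma eta_bin (R : realType) (Z : finType) (W : bool -> Z -> R) :
  eta_TV W = TV (W false) (W true).
Proof.
rewrite /eta_TV.
have -> : [set r : R | exists p q : bool -> R,
        [/\ is_dist p, is_dist q, p <> q &
            r = TV (out_dist W p) (out_dist W q) / TV p q]]
   = [set TV (W false) (W true)].
  rewrite eqEsubset; split => r /=.
    move=> [p [q [[_ hp] [_ hq] hpq ->]]].
    rewrite big_bool /= in hp; rewrite big_bool /= in hq.
    apply: ratio_eq; [by rewrite addrC | by rewrite addrC|].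
    apply/negP => /eqP e; apply: hpq; apply/funext => -[] //.
    have h1 : p false = 1 - p true by rewrite -hp addrC addrK.
    by rewrite h1 e -hq addrC addrK.
  move=> ->.
  exists (fun x : bool => if x then 0 else 1), (fun x : bool => if x then 1 else 0).
  split.
  - split; first by case=> //=; rewrite ?lexx ?ler01.
    by rewrite big_bool /= add0r.
  - split; first by case=> //=; rewrite ?lexx ?ler01.
    by rewrite big_bool /= addr0.
  - move/(congr1 (fun f => f true)) => /= /eqP; rewrite eq_sym oner_eq0 //.
  - by rewrite ratio_eq //= ?add0r ?addr0 // eq_sym oner_eq0.
exact: sup1.
Qed.

Lemma sum_opt (R : realType) (f : option bool -> R) :
  \sum_(o : option bool) f o = f None + (f (Some true) + f (Some false)).
Proof. by rewrite big_mkcond /= unlock /= /index_enum /= !unlock /= !unlock /= addr0. Qed.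

Lemma sum_split_cond (R : realType) (Y : finType) (s : Y -> bool) (f : Y -> R) z :
  \sum_y f y * (if z == s y then 1 else 0) = \sum_(y | s y == z) f y.
Proof.
rewrite [RHS]big_mkcond; apply: eq_bigr => y _; rewrite eq_sym.
by case: (s y == z); rewrite ?mulr1 ?mulr0.
Qed.

Theorem mainTheorem8 (R : realType) (Y : finType) (F : bool -> Y -> R) :
  is_channel F ->
  exists D : bool -> bool -> R,
    [/\ is_channel D,
        eta_TV D = eta_TV F,
        degraded (BEC (alpha F)) F,
        degraded F D &
        alpha F = 1 - eta_TV F].
Proof.
move=> hF.
have [a0 a1] := hF false; have [b0 b1] := hF true.
pose s y := F false y < F true y.
pose P := \sum_(y | s y) (F true y - F false y).
pose N := \sum_(y | ~~ s y) (F false y - F true y).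
have hPN : N = P.
  have : \sum_y (F false y - F true y) = 0 by rewrite sumrB a1 b1 subrr.
  rewrite (bigID s) /=.
  have -> : \sum_(y | s y) (F false y - F true y) = - P.
    by rewrite /P -sumrN; apply: eq_bigr => y _; rewrite opprB.
  rewrite -/N; lra.
have hP0 : 0 <= P by apply: sumr_ge0 => y hy; rewrite subr_ge0 ltW.
have hTV : TV (F false) (F true) = P.
  rewrite /TV (bigID s) /=.
  have -> : \sum_(y | s y) `|F false y - F true y| = P.
    by apply: eq_bigr => y hy; rewrite distrC gtr0_norm // subr_gt0.
  have -> : \sum_(y | ~~ s y) `|F false y - F true y| = N.
    by apply: eq_bigr => y hy; rewrite ger0_norm // subr_ge0 leNgt.
  rewrite hPN; lra.
have hal : alpha F = 1 - P.
  rewrite /alpha (bigID s) /=.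
  have -> : \sum_(y | s y) Num.min (F false y) (F true y) = \sum_(y | s y) F false y.
    by apply: eq_bigr => y hy; rewrite min_l // ltW.
  have -> : \sum_(y | ~~ s y) Num.min (F false y) (F true y) = \sum_(y | ~~ s y) F true y.
    by apply: eq_bigr => y hy; rewrite min_r // leNgt.
  have e1 : \sum_y F true y = \sum_(y|s y) F true y + \sum_(y | ~~ s y) F true y
    := bigID _ _ _.
  have e2 : P = \sum_(y|s y) F true y - \sum_(y|s y) F false y by rewrite /P sumrB.
  lra.
have heta : eta_TV F = P by rewrite eta_bin hTV.
pose K (y : Y) (z : bool) : R := if z == s y then 1 else 0.
exists (fun x z => \sum_y F x y * K y z).
split.
- move=> x; split.
    move=> z; apply: sumr_ge0 => y _; apply: mulr_ge0; first by case: (hF x).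
    by rewrite /K; case: eqP.
  rewrite exchange_big /=.
  rewrite -(proj2 (hF x)); apply: eq_bigr => y _.
  by rewrite -mulr_sumr big_bool /K /=; case: (s y); rewrite /= ?addr0 ?add0r mulr1.
- rewrite eta_bin heta /TV big_bool /= /K !sum_split_cond -!sumrB.
  have -> : \sum_(y | s y == true) (F false y - F true y) = - P.
    rewrite /P -sumrN; apply: eq_big => y; first by rewrite eqb_id.
    by move=> _; rewrite opprB.
  have -> : \sum_(y | s y == false) (F false y - F true y) = N.
    by apply: eq_big => y //; rewrite eqbF_neg.
  rewrite normrN hPN ger0_norm //; lra.
- pose al := alpha F.
  pose m y := Num.min (F false y) (F true y).
  have hsm : \sum_y m y = al by [].
  have hm : forall x y, m y <= F x y.
    by move=> x y; case: x; rewrite /m ge_min lexx ?orbT.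
  have hm0 : forall y, 0 <= m y by move=> y; rewrite /m le_min a0 b0.
  have hal0 : 0 <= al by rewrite -hsm; apply: sumr_ge0 => y _; exact: hm0.
  have hal1 : al <= 1 by rewrite /al hal; lra.
  pose K' (o : option bool) (y : Y) : R := match o with
    | None => if al == 0 then F false y else m y / al
    | Some x => if al == 1 then F x y else (F x y - m y) / (1 - al) end.
  exists K'; split.
  + case=> [x|]; split.
    * move=> y /=; case: eqP => _; first by case: (hF x).
      by apply: divr_ge0; rewrite subr_ge0 ?hm.
    * rewrite /=; case: eqP => h; first by case: (hF x).
      rewrite -mulr_suml sumrB (proj2 (hF x)) hsm mulfV //.
      by rewrite subr_eq0 eq_sym; apply/eqP.
    * move=> y /=; case: eqP => _ //; exact: divr_ge0.
    * rewrite /=; case: eqP => h //.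
      by rewrite -mulr_suml hsm mulfV //; apply/eqP.
  + move=> x y.
    have key : F x y = al * K' None y + (1 - al) * K' (Some x) y.
      rewrite /K'; case: eqP => e0; case: eqP => e1.
      * by exfalso; move: e1; rewrite e0 => /eqP; rewrite eq_sym oner_eq0.
      * have my0 : m y = 0.
          apply: (psumr_eq0P (P := predT) (F := m)) => //; by rewrite hsm.
        by rewrite e0 my0 mul0r add0r subr0 !subr0 divr1 mul1r.
      * have hfm : F x y - m y = 0.
          apply: (psumr_eq0P (P := predT) (F := fun y => F x y - m y)) => //.
            by move=> i _; rewrite subr_ge0.
          by rewrite sumrB (proj2 (hF x)) hsm e1 subrr.
        rewrite e1 subrr mul0r addr0 mul1r divr1; apply/eqP; rewrite -subr_eq0.
        by apply/eqP.
      * field; apply/andP; split; apply/eqP => //.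
        by move=> h; apply: e1; lra.
    case: x key => key; rewrite sum_opt /BEC /= ?mul0r ?addr0 ?add0r; exact: key.
- exists K; split => //.
  move=> y; split; first by move=> z; rewrite /K; case: eqP.
  by rewrite big_bool /K; case: (s y); rewrite /= ?addr0 ?add0r.
- by rewrite hal heta.
Qed.
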